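(* Let $F\colon \mathbb{R}^{nm \times nm} \to \mathbb{R}$ be differentiable at $X = A \otimes B$, where $A \in \mathbb{R}^{n \times n}$ and $B \in \mathbb{R}^{m \times m}$ are nonzero matrices. Define $G\colon \mathbb{R}^{n \times n} \to \mathbb{R}$ by $G(A_1) = F(A_1 \otimes B)$. Then $G$ is differentiable at $A$ and \[ \nabla G(A) = \sum_{j=1}^{m} \left(I_n \otimes e_j^{T} B_L^{*}\right) \nabla F(X) \left(I_n \otimes B_R^{*} e_j\right) \] for any $B_L, B_R \in \mathbb{C}^{m \times m}$ with $B = B_L B_R$. Similarly, define $H\colon \mathbb{R}^{m \times m} \to \mathbb{R}$ by $H(B_1) = F(A \otimes B_1)$. Then $H$ is differentiable at $B$ and \[ \nabla H(B) = \sum_{i=1}^{n} \left(e_i^{T} A_L^{*} \otimes I_m\right) \nabla F(X) \left(A_R^{*} e_i \otimes I_m\right) \] for any $A_L, A_R \in \mathbb{C}^{n \times n}$ with $A = A_L A_R$.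
   Context: $\otimes$ denotes the Kronecker product, $e_j$ the $j$th standard unit vector of appropriate size, $I_n$ the $n\times n$ identity, and $(\cdot)^*$ the conjugate transpose. Gradients of real-valued functions of real matrices are taken with respect to the Frobenius inner product $\langle X, Y\rangle_F = \operatorname{trace}(X^T Y)$. *)

(* Defs.v *)
From mathcomp Require Import all_boot all_order all_algebra.
From mathcomp Require Import all_classical all_reals all_analysis.
From mathcomp.real_closed Require Export complex mxtens.

Set Implicit Arguments.
Unset Strict Implicit.
Unset Printing Implicit Defensive.

Import Order.TTheory GRing.Theory Num.Theory.
Local Open Scope ring_scope.

(* Gradient of f : 'M[R]_(p,q) -> R at x w.r.t. the Frobenius inner product
   <X,Y> = tr(X^T Y) = \sum_{i,j} X i j * Y i j : the matrix whose (i,j) entry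
   is the derivative 'd f x applied to the unit matrix E_ij, so that
   'd f x H = <gradient f x, H>_F whenever f is differentiable at x. *)
Definition gradient (R : realType) (p q : nat) (f : 'M[R]_(p, q) -> R)
  (x : 'M[R]_(p, q)) : 'M[R]_(p, q) :=
  \matrix_(i, j) ('d f (x : ('M[R]_(p, q) : normedModType R))
                    (delta_mx i j : 'M[R]_(p, q))).
Arguments gradient {R p q} f x.

Definition mxC (R : realType) (p q : nat) (M : 'M[R]_(p, q)) : 'M[R[i]]_(p, q) :=
  map_mx (fun x : R => x%:C)%C M.
Arguments mxC {R p q} M.

Definition ctrmx (R : realType) (p q : nat) (M : 'M[R[i]]_(p, q)) : 'M[R[i]]_(q, p) :=
  (map_mx (@conjc R) M)^T.
Arguments ctrmx {R p q} M.

(* Main.v *)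
From HB Require Import structures.
Require Import Defs.
From mathcomp Require Import all_boot all_order all_algebra.
From mathcomp Require Import all_classical all_reals all_analysis.
From mathcomp.real_closed Require Import complex mxtens.
Import Order.TTheory GRing.Theory Num.Theory.
Local Open Scope ring_scope.

Section S.
Variable R : realType.

Lemma entry_le_norm p q (x : 'M[R]_(p,q)) i j : `|x i j| <= `|x|.
Proof.
rewrite [X in _ <= X]/Num.Def.normr /= mx_normrE.
by apply/bigmax_geP; right => /=; exists (i, j).
Qed.

Lemma norm_le_entry p q (x : 'M[R]_(p,q)) c : 0 <= c -> (forall i j, `|x i j| <= c) -> `|x| <= c.
Proof.
move=> c0 H; rewrite [X in X <= _]/Num.Def.normr /= mx_normrE.
by apply/bigmax_leP; split => // -[i j] _; apply: H.
Qed.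

Definition tensl n n' m m' (B : 'M[R]_(m,m')) (A1 : 'M[R]_(n,n')) := A1 *t B.
Definition tensr n n' m m' (A : 'M[R]_(n,n')) (B1 : 'M[R]_(m,m')) := A *t B1.

Arguments tensl {n n' m m'} B A1.
Arguments tensr {n n' m m'} A B1.
Lemma tensl_linear n n' m m' (B : 'M[R]_(m,m')) : linear (@tensl n n' m m' B).
Proof. by move=> a x y; apply/matrixP => i j; rewrite !mxE mulrDl mulrA. Qed.
Lemma tensr_linear n n' m m' (A : 'M[R]_(n,n')) : linear (@tensr n n' m m' A).
Proof. by move=> a x y; apply/matrixP => i j; rewrite !mxE mulrDr mulrCA. Qed.

HB.instance Definition _ n n' m m' B := GRing.isLinear.Build R _ _ _ (@tensl n n' m m' B) (@tensl_linear n n' m m' B).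
HB.instance Definition _ n n' m m' A := GRing.isLinear.Build R _ _ _ (@tensr n n' m m' A) (@tensr_linear n n' m m' A).

Lemma tensl_cont n n' m m' (B : 'M[R]_(m,m')) : continuous (tensl B : ('M[R]_(n,n') : normedModType R) -> ('M[R]_(n * m, n' * m') : normedModType R)).
Proof.
apply: bounded_linear_continuous; apply/linear_boundedP.
near=> r => x; apply: norm_le_entry => [|i j].
  rewrite mulr_ge0 //; near: r; exact: nbhs_pinfty_ge.
rewrite mxE normrM mulrC; apply: ler_pM => //; last exact: entry_le_norm.
apply: le_trans; first exact: entry_le_norm. near: r; apply: nbhs_pinfty_ge.
Unshelve. all: by end_near. Qed.

Lemma tensr_cont n n' m m' (A : 'M[R]_(n,n')) : continuous (tensr A : ('M[R]_(m,m') : normedModType R) -> ('M[R]_(n * m, n' * m') : normedModType R)).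
Proof.
apply: bounded_linear_continuous; apply/linear_boundedP.
near=> r => x; apply: norm_le_entry => [|i j].
  rewrite mulr_ge0 //; near: r; exact: nbhs_pinfty_ge.
rewrite mxE normrM; apply: ler_pM => //; last exact: entry_le_norm.
apply: le_trans; first exact: entry_le_norm. near: r; apply: nbhs_pinfty_ge.
Unshelve. all: by end_near. Qed.

Local Notation V p q := ('M[R]_(p,q) : normedModType R).

Lemma grad_comp p q r s (L : {linear V p q -> V r s}) (F : V r s -> R) (x : V p q) :
  continuous L -> differentiable F (L x) ->
  differentiable (F \o L) x /\
  gradient (F \o L) x = \matrix_(i,j) 'd F (L x) (L (delta_mx i j)).
Proof.
move=> Lc dF; have dL : differentiable L x by exact: linear_differentiable.
split; first exact: differentiable_comp.
apply/matrixP => i j; rewrite !mxE diff_comp //= diff_lin //.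
Qed.

Lemma dF_expand r s (F : V r s -> R) (y : V r s) (M : 'M[R]_(r,s)) :
  'd F y M = \sum_i \sum_j M i j * gradient F y i j.
Proof.
rewrite {1}(matrix_sum_delta M) linear_sum; apply: eq_bigr => i _.
rewrite linear_sum; apply: eq_bigr => j _; rewrite linearZ mxE //.
Qed.

Lemma sum_tens (K : nmodType) n m (f : 'I_(n * m) -> K) :
  \sum_a f a = \sum_i \sum_k f (mxtens_index (i,k)).
Proof.
rewrite pair_big /= (reindex (fun p : 'I_n * 'I_m => mxtens_index p)) /=.
  by apply: eq_bigr => -[i k].
by exists (@mxtens_unindex n m) => a _; rewrite (mxtens_indexK, mxtens_unindexK).
Qed.


Lemma sum_idl (K : pzRingType) k (i : 'I_k) (f : 'I_k -> K) :
  \sum_a (1%:M : 'M[K]_k) i a * f a = f i.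
Proof.
rewrite (bigD1 i) //= big1 ?addr0 ?mxE ?eqxx ?mul1r // => a ai.
by rewrite mxE eq_sym (negbTE ai) mul0r.
Qed.

Lemma sum_idr (K : pzRingType) k (i : 'I_k) (f : 'I_k -> K) :
  \sum_a f a * (1%:M : 'M[K]_k) a i = f i.
Proof.
rewrite (bigD1 i) //= big1 ?addr0 ?mxE ?eqxx ?mulr1 // => a ai.
by rewrite mxE (negbTE ai) mulr0.
Qed.

Lemma sum_tens_deltal (K : pzRingType) n m n' m' i j (B : 'M[K]_(m,m'))
   (g : 'M[K]_(n * m, n' * m')) :
  \sum_p \sum_q ((delta_mx i j : 'M[K]_(n,n')) *t B) p q * g p q =
  \sum_k \sum_l B k l * g (mxtens_index (i,k)) (mxtens_index (j,l)).
Proof.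
rewrite sum_tens (bigD1 i) //= [X in _ + X = _]big1 ?addr0; last first.
  move=> a ai; apply: big1 => k _; apply: big1 => q _; case: (mxtens_indexP q) => b l.
  by rewrite tensmxE mxE (negbTE ai) mul0r mul0r.
apply: eq_bigr => k _; rewrite sum_tens (bigD1 j) //= [X in _ + X = _]big1 ?addr0.
  by apply: eq_bigr => l _; rewrite tensmxE mxE !eqxx mul1r.
by move=> b bj; apply: big1 => l _; rewrite tensmxE mxE (negbTE bj) andbF mul0r mul0r.
Qed.

Lemma sum_tens_deltar (K : pzRingType) n m n' m' i j (A : 'M[K]_(n,n'))
   (g : 'M[K]_(n * m, n' * m')) :
  \sum_p \sum_q (A *t (delta_mx i j : 'M[K]_(m,m'))) p q * g p q =
  \sum_k \sum_l A k l * g (mxtens_index (k,i)) (mxtens_index (l,j)).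
Proof.
rewrite sum_tens; apply: eq_bigr => k _.
rewrite (bigD1 i) //= [X in _ + X = _]big1 ?addr0; last first.
  move=> a ai; apply: big1 => q _; case: (mxtens_indexP q) => b l.
  by rewrite tensmxE mxE (negbTE ai) mulr0 mul0r.
rewrite sum_tens; apply: eq_bigr => l _; rewrite (bigD1 j) //= [X in _ + X = _]big1 ?addr0.
  by rewrite tensmxE mxE !eqxx mulr1.
by move=> b bj; rewrite tensmxE mxE (negbTE bj) andbF mulr0 mul0r.
Qed.

Lemma cast1 n (i : 'I_n) : cast_ord (esym (muln1 n)) i = mxtens_index (i, (ord0 : 'I_1)).
Proof. by apply: val_inj => /=; rewrite muln1 addn0. Qed.
Lemma cast1' n (i : 'I_n) : cast_ord (esym (mul1n n)) i = mxtens_index ((ord0 : 'I_1), i).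
Proof. by apply: val_inj => /=. Qed.

Lemma sum_idl2 (K : pzRingType) k (i : 'I_k) (f : 'I_k -> K) :
  \sum_a (1%:M : 'M[K]_k) a i * f a = f i.
Proof.
rewrite (bigD1 i) //= big1 ?addr0 ?mxE ?eqxx ?mul1r // => a ai.
by rewrite mxE (negbTE ai) mul0r.
Qed.

Lemma sum_idr2 (K : pzRingType) k (i : 'I_k) (f : 'I_k -> K) :
  \sum_a f a * (1%:M : 'M[K]_k) i a = f i.
Proof.
rewrite (bigD1 i) //= big1 ?addr0 ?mxE ?eqxx ?mulr1 // => a ai.
by rewrite mxE eq_sym (negbTE ai) mulr0.
Qed.

Lemma castl (K : comPzRingType) n m (r : 'M[K]_(1,m)) (c : 'M[K]_(m,1))
    (G : 'M[K]_(n * m)) i j :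
  castmx (muln1 n, muln1 n) ((1%:M : 'M[K]_n) *t r *m G *m ((1%:M : 'M[K]_n) *t c)) i j =
  \sum_k \sum_l r 0 k * G (mxtens_index (i,k)) (mxtens_index (j,l)) * c l 0.
Proof.
rewrite castmxE !cast1 mxE sum_tens.
under eq_bigr => b _ do under eq_bigr => l _ do rewrite tensmxE mulrCA.
rewrite exchange_big /=.
under eq_bigr => l _ do rewrite sum_idl2.
rewrite [RHS]exchange_big /=; apply: eq_bigr => l _.
rewrite mxE sum_tens mulr_suml.
under [LHS]eq_bigr => a _ do rewrite mulr_suml.
under eq_bigr => a _ do under eq_bigr => k _ do rewrite tensmxE -!mulrA.
under eq_bigr => a _ do rewrite -mulr_sumr.
rewrite sum_idl; apply: eq_bigr => k _; by rewrite !mulrA.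
Qed.

Lemma castr (K : comPzRingType) n m (r : 'M[K]_(1,n)) (c : 'M[K]_(n,1))
    (G : 'M[K]_(n * m)) i j :
  castmx (mul1n m, mul1n m) (r *t (1%:M : 'M[K]_m) *m G *m (c *t (1%:M : 'M[K]_m))) i j =
  \sum_k \sum_l r 0 k * G (mxtens_index (k,i)) (mxtens_index (l,j)) * c l 0.
Proof.
rewrite castmxE !cast1' mxE sum_tens.
rewrite [RHS]exchange_big /=; apply: eq_bigr => l _.
under eq_bigr => b _ do rewrite tensmxE mulrA.
rewrite sum_idr mxE sum_tens mulr_suml; apply: eq_bigr => k _.
under eq_bigr => b _ do rewrite tensmxE mulrAC.
by rewrite sum_idr2 mulrAC.
Qed.

End S.

Lemma rowctr (R : realType) p q (M : 'M[R[i]]_(p,q)) t k :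
  (delta_mx 0 t *m ctrmx M : 'M[R[i]]_(1,p)) 0 k = conjc (M k t).
Proof. by rewrite -rowE !mxE. Qed.

Lemma colctr (R : realType) p q (M : 'M[R[i]]_(p,q)) t l :
  (ctrmx M *m delta_mx t 0 : 'M[R[i]]_(q,1)) l 0 = conjc (M t l).
Proof. by rewrite -colE !mxE. Qed.

Lemma conj_real (R : realType) (x : R) : conjc (x%:C)%C = (x%:C)%C.
Proof. by rewrite /conjc /= oppr0. Qed.

Lemma conj_sum_real (R : realType) m (B : 'M[R]_m) (BL BR : 'M[R[i]]_m) k l :
  mxC B = BL *m BR -> \sum_t conjc (BL k t) * conjc (BR t l) = (B k l)%:C%C.
Proof.
move=> hB; under eq_bigr => t _ do rewrite -rmorphM.
rewrite -rmorph_sum.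
have -> : \sum_t BL k t * BR t l = (BL *m BR) k l by rewrite mxE.
by rewrite -hB mxE; exact: conj_real.
Qed.
Arguments tensl {R n n' m m'} B A1.
Arguments tensr {R n n' m m'} A B1.

Theorem lemma3p2 (R : realType) (n m : nat) (F : 'M[R]_(n * m) -> R)
  (A : 'M[R]_n) (B : 'M[R]_m) :
  A != 0 -> B != 0 -> differentiable F (A *t B : ('M[R]_(n * m) : normedModType R)) ->
  (differentiable (fun A1 : 'M[R]_n => F (A1 *t B)) (A : ('M[R]_n : normedModType R)) /\
   forall BL BR : 'M[R[i]]_m, mxC B = BL *m BR ->
     mxC (gradient (fun A1 : 'M[R]_n => F (A1 *t B)) A) =
     \sum_(j < m)
        castmx (muln1 n, muln1 n)
          ((1%:M : 'M[R[i]]_n) *t (delta_mx 0 j *m ctrmx BL : 'M[R[i]]_(1, m))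
           *m mxC (gradient F (A *t B))
           *m ((1%:M : 'M[R[i]]_n) *t (ctrmx BR *m delta_mx j 0 : 'M[R[i]]_(m, 1)))))
  /\
  (differentiable (fun B1 : 'M[R]_m => F (A *t B1)) (B : ('M[R]_m : normedModType R)) /\
   forall AL AR : 'M[R[i]]_n, mxC A = AL *m AR ->
     mxC (gradient (fun B1 : 'M[R]_m => F (A *t B1)) B) =
     \sum_(i < n)
        castmx (mul1n m, mul1n m)
          ((delta_mx 0 i *m ctrmx AL : 'M[R[i]]_(1, n)) *t (1%:M : 'M[R[i]]_m)
           *m mxC (gradient F (A *t B))
           *m ((ctrmx AR *m delta_mx i 0 : 'M[R[i]]_(n, 1)) *t (1%:M : 'M[R[i]]_m)))).
Proof.
move=> _ _ dF; split.
  have [d1 g1] := @grad_comp R n n (n * m) (n * m) (tensl B) F A (@tensl_cont R _ _ _ _ B) dF.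
  split; first exact: d1.
  move=> BL BR hB.
  have -> : gradient (fun A1 => F (A1 *t B)) A = gradient (F \o tensl B) A by [].
  rewrite g1; apply/matrixP => i j; rewrite !mxE summxE.
  rewrite /tensl dF_expand sum_tens_deltal.
  under [RHS]eq_bigr => t _ do rewrite castl.
  rewrite rmorph_sum exchange_big; apply: eq_bigr => k _ /=.
  rewrite rmorph_sum exchange_big; apply: eq_bigr => l _ /=.
  under eq_bigr => t _ do rewrite rowctr colctr mulrAC.
  rewrite -mulr_suml (@conj_sum_real R m B BL BR k l hB) rmorphM; congr (_ * _); rewrite /tensl !mxE //.
have [d2 g2] := @grad_comp R m m (n * m) (n * m) (tensr A) F B (@tensr_cont R _ _ _ _ A) dF.
split; first exact: d2.
move=> AL AR hA.
have -> : gradient (fun B1 => F (A *t B1)) B = gradient (F \o tensr A) B by [].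
rewrite g2; apply/matrixP => i j; rewrite !mxE summxE.
rewrite /tensr dF_expand sum_tens_deltar.
under [RHS]eq_bigr => t _ do rewrite castr.
rewrite rmorph_sum exchange_big; apply: eq_bigr => k _ /=.
rewrite rmorph_sum exchange_big; apply: eq_bigr => l _ /=.
under eq_bigr => t _ do rewrite rowctr colctr mulrAC.
rewrite -mulr_suml (@conj_sum_real R n A AL AR k l hA) rmorphM; congr (_ * _).
by rewrite /tensr !mxE.
Qed.
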